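(* Let $Z$ be a real random variable such that for some $\theta>0$, $\Pr[|Z-\mathbb E[Z]|\ge\xi]\le 2e^{-\xi^2\theta^2/2}$ for all $\xi\ge0$. Then for every $\kappa>0$, $$\Pr[Z\ge\mathbb E[Z]]\ge\frac{\theta^2\operatorname{Var}[Z]}{2\kappa^2}-2e^{-\kappa^2/2}\left(1+\sqrt2+\frac{\sqrt{2\pi}}{\kappa}+\frac1{\kappa^2}\right).$$ *)

(* Defs.v *)
From HB Require Import structures.
From mathcomp Require Export all_boot all_order all_algebra.
From mathcomp Require Export all_classical all_reals all_analysis.

(* Main.v *)
From HB Require Import structures.
Require Import Defs.
From mathcomp Require Import measurable_realfun.
From mathcomp Require Import ring lra.
Set Warnings "-all".
Import Order.TTheory GRing.Theory Num.Theory.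
Import numFieldNormedType.Exports.
Local Open Scope classical_set_scope.
Local Open Scope ring_scope.

Lemma LC d (T : measurableType d) (R : realType) (P : probability T R)
  (Y : T -> R) (mY : measurable_fun setT Y) (Y0 : forall w, 0 <= Y w)
  (c l : R) (c0 : 0 <= c) (l0 : 0 < l)
  (H : forall r, 0 <= r -> (P [set w | (r < Y w)%R] <= (c * expR (- l * r))%:E)%E) :
  (\int[P]_w (Y w)%:E <= (c / l)%:E)%E.
Proof.
pose Y' : {RV P >-> R} := mfun_Sub (mem_set mY : Y \in mfun).
have E : (\int[P]_w (Y w)%:E = \int[lebesgue_measure]_(r in `[0%R, +oo[) ccdf Y' r)%E.
  by rewrite -(@ge0_expectation_ccdf _ _ _ P Y' Y0) expectation_def.
rewrite E.
apply: (@le_trans _ _ (\int[lebesgue_measure]_(r in `[0%R, +oo[)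
   ((c / l)%:E * (exponential_pdf l r)%:E))%E).
  apply: ge0_le_integral => //.
  - apply: (measurable_funS measurableT) => //; exact: ccdf_measurable.
  - apply: emeasurable_funM => //. 
    apply/measurable_EFinP; apply: measurable_funTS; exact: measurable_exponential_pdf.
  - move=> r; rewrite /= in_itv /= andbT => r0.
    rewrite exponential_pdfE // -EFinM mulrA divfK ?gt_eqF //.
    rewrite /ccdf /distribution /pushforward.
    apply: le_trans (H r r0).
    rewrite le_eqVlt; apply/orP; left; apply/eqP; congr (P _).
    by apply/seteqP; split => w /=; rewrite in_itv /= andbT.
apply: (@le_trans _ _ (\int[lebesgue_measure]_(r in setT)
   ((c / l)%:E * (exponential_pdf l r)%:E))%E).
  apply: ge0_subset_integral => //.
  - apply: emeasurable_funM => //. 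
    apply/measurable_EFinP; exact: measurable_exponential_pdf.
  - move=> r _; rewrite -EFinM lee_fin; apply: mulr_ge0.
      by apply: divr_ge0 => //; exact: ltW.
    exact: exponential_pdf_ge0 (ltW l0) _.
rewrite ge0_integralZl //.
- by rewrite integral_exponential_pdf // mule1.
- apply/measurable_EFinP; exact: measurable_exponential_pdf.
- move=> r _; rewrite lee_fin; exact: exponential_pdf_ge0 (ltW l0) _.
- by rewrite lee_fin; apply: divr_ge0 => //; exact: ltW.
Qed.

Lemma mset_le d (T : measurableType d) (R : realType) (f : T -> R)
  (mf : measurable_fun setT f) (c : R) : measurable [set w | (c <= f w)%R].
Proof.
have := mf measurableT `[c, +oo[%classic (measurable_itv _).
rewrite setTI; congr measurable.
by apply/seteqP; split => w; rewrite /= in_itv /= andbT.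
Qed.

Lemma mset_lt d (T : measurableType d) (R : realType) (f : T -> R)
  (mf : measurable_fun setT f) (c : R) : measurable [set w | (c < f w)%R].
Proof.
have := mf measurableT `]c, +oo[%classic (measurable_itv _).
rewrite setTI; congr measurable.
by apply/seteqP; split => w; rewrite /= in_itv /= andbT.
Qed.

Lemma Eu2 d (T : measurableType d) (R : realType) (P : probability T R)
  (X : T -> R) (mX : measurable_fun setT X) (theta b : R)
  (th0 : 0 < theta) (b0 : 0 <= b)
  (Ht : forall xi : R, 0 <= xi ->
     (P [set w | (xi <= `|X w|)%R ] <=
      (2 * expR (- (xi ^+ 2 * theta ^+ 2) / 2))%:E)%E) :
  (\int[P]_w ((Num.max (`|X w| - b) 0) ^+ 2)%:E <=
    ((2 * expR (- (b ^+ 2 * theta ^+ 2) / 2)) / (theta ^+ 2 / 2))%:E)%E.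
Proof.
have mu : measurable_fun setT (fun w => Num.max (`|X w| - b) 0).
  apply: measurable_maxr => //; apply: measurable_funB => //.
  exact: measurableT_comp (@normr_measurable R setT) mX.
apply: LC.
- exact: measurable_funX.
- by move=> w; exact: sqr_ge0.
- by rewrite mulr_ge0 // expR_ge0.
- by rewrite divr_gt0 // exprn_gt0.
move=> r r0.
set s := Num.sqrt r.
have s0 : 0 <= s by exact: sqrtr_ge0.
have ss : s ^+ 2 = r by rewrite sqr_sqrtr.
apply: le_trans (le_measure _ _ _ _) (le_trans (Ht (b + s) _) _).
- by rewrite inE; apply: mset_lt; exact: measurable_funX.
- by rewrite inE; apply: mset_le => //; exact: measurableT_comp (@normr_measurable R setT) mX.
- move=> w /=; rewrite maxEle; case: ifP => h.
    by move=> hr; exfalso; move: hr; rewrite expr0n /= ltNge r0.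
  move=> hr; move/negbT: h; rewrite -ltNge => h.
  have : s < `|X w| - b.
    rewrite ltNge; apply/negP => hle.
    have : (`|X w| - b) ^+ 2 <= s ^+ 2.
      by rewrite ler_sqr // ?nnegrE ?ltW.
    by rewrite ss leNgt hr.
  by move=> /ltW; rewrite lerBrDl addrC.
- by rewrite addr_ge0.
rewrite lee_fin -mulrA ler_pM2l // -expRD ler_expR.
have : 0 <= b * s * theta ^+ 2 by apply: mulr_ge0; [exact: mulr_ge0 | exact: sqr_ge0].
rewrite -ss; nra.
Qed.
Arguments Eu2 {d T R P X} mX {theta b}.

Lemma Eu1 d (T : measurableType d) (R : realType) (P : probability T R)
  (X : T -> R) (mX : measurable_fun setT X) (theta b : R)
  (th0 : 0 < theta) (b0 : 0 < b)
  (Ht : forall xi : R, 0 <= xi ->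
     (P [set w | (xi <= `|X w|)%R ] <=
      (2 * expR (- (xi ^+ 2 * theta ^+ 2) / 2))%:E)%E) :
  (\int[P]_w (Num.max (`|X w| - b) 0)%:E <=
    ((2 * expR (- (b ^+ 2 * theta ^+ 2) / 2)) / (b * theta ^+ 2))%:E)%E.
Proof.
have mu : measurable_fun setT (fun w => Num.max (`|X w| - b) 0).
  apply: measurable_maxr => //; apply: measurable_funB => //.
  exact: measurableT_comp (@normr_measurable R setT) mX.
apply: LC => //.
- by move=> w; rewrite le_max lexx orbT.
- by rewrite mulr_gt0 // exprn_gt0.
move=> r r0.
apply: le_trans (le_measure _ _ _ _) (le_trans (Ht (b + r) _) _).
- by rewrite inE; apply: mset_lt.
- by rewrite inE; apply: mset_le => //; exact: measurableT_comp (@normr_measurable R setT) mX.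
- move=> w /=; rewrite maxEle; case: ifP => h.
    by move=> hr; exfalso; move: hr; rewrite ltNge r0.
  by move=> /ltW; rewrite lerBrDl addrC.
- by rewrite addr_ge0 // ltW.
rewrite lee_fin -mulrA ler_pM2l // -expRD ler_expR.
have : 0 <= r ^+ 2 * theta ^+ 2 by apply: mulr_ge0; exact: sqr_ge0.
nra.
Qed.
Arguments Eu1 {d T R P X} mX {theta b}.
Lemma real_large (R : realType) (th k v p E s2 s2pi : R) :
  0 < th -> 1/2 <= k -> 0 <= E -> 1 <= s2 -> 2 <= s2pi ->
  v <= 2 * (k / th) ^+ 2 * p + 2 * E / (th ^+ 2 / 2) +
       3 * (k / th) * (2 * E / (k / th * th ^+ 2)) ->
  th ^+ 2 / (2 * k ^+ 2) * v - 2 * E * (1 + s2 + s2pi / k + 1 / k ^+ 2) <= p.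
Proof.
move=> th0 k2 E0 s21 s2pi2 hv.
have k0 : 0 < k by apply: lt_le_trans k2; lra.
have eq1 : 2 * (k / th) ^+ 2 * p + 2 * E / (th ^+ 2 / 2) +
       3 * (k / th) * (2 * E / (k / th * th ^+ 2)) =
       (2 * k ^+ 2 / th ^+ 2) * (p + 5 * E / k ^+ 2).
  by field; rewrite ?(gt_eqF k0) ?(gt_eqF th0).
rewrite eq1 in hv.
have h1 : th ^+ 2 / (2 * k ^+ 2) * v <= p + 5 * E / k ^+ 2.
  have : th ^+ 2 / (2 * k ^+ 2) * v <= th ^+ 2 / (2 * k ^+ 2) * ((2 * k ^+ 2 / th ^+ 2) * (p + 5 * E / k ^+ 2)).
    by rewrite ler_wpM2l // divr_ge0 // ?sqr_ge0 // mulr_ge0 // sqr_ge0.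
  rewrite mulrA (_ : th ^+ 2 / (2 * k ^+ 2) * (2 * k ^+ 2 / th ^+ 2) = 1) ?mul1r //.
  by field; rewrite ?(gt_eqF k0) ?(gt_eqF th0).
set ik := k^-1.
have ik0 : 0 < ik by rewrite invr_gt0.
have ik2 : ik <= 2.
  rewrite /ik -[2]invrK lef_pV2 ?posrE //; lra.
rewrite (_ : 5 * E / k ^+ 2 = 5 * E * ik ^+ 2) in h1; last by rewrite /ik exprVn.
rewrite (_ : 1 / k ^+ 2 = ik ^+ 2); last by rewrite /ik exprVn div1r.
suff : 5 * E * ik ^+ 2 <= 2 * E * (1 + s2 + s2pi * ik + ik ^+ 2) by lra.
have h : 3 * ik ^+ 2 <= 2 * (1 + s2) + 2 * s2pi * ik.
  have h3 : 0 <= ik * (s2pi - 2) by rewrite mulr_ge0 ?subr_ge0 // ltW.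
  have h2 : (3 * ik + 2) * (ik - 2) <= 0.
    by rewrite mulr_ge0_le0 // ?subr_le0 //; lra.
  lra.
have := ler_wpM2l E0 h.
lra.
Qed.

Lemma real_small (R : realType) (th k v p E s2 s2pi : R) :
  0 < th -> 0 < k -> k < 1/2 -> 1 - k ^+ 2 / 2 <= E -> 1 <= s2 -> 2 <= s2pi ->
  0 <= p -> v <= 4 / th ^+ 2 ->
  th ^+ 2 / (2 * k ^+ 2) * v - 2 * E * (1 + s2 + s2pi / k + 1 / k ^+ 2) <= p.
Proof.
move=> th0 k0 k2 hE s21 s2pi2 p0 hv.
have h1 : th ^+ 2 / (2 * k ^+ 2) * v <= 2 / k ^+ 2.
  have : th ^+ 2 / (2 * k ^+ 2) * v <= th ^+ 2 / (2 * k ^+ 2) * (4 / th ^+ 2).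
    by rewrite ler_wpM2l // divr_ge0 // ?sqr_ge0 // mulr_ge0 // sqr_ge0.
  rewrite (_ : th ^+ 2 / (2 * k ^+ 2) * (4 / th ^+ 2) = 2 / k ^+ 2) //.
  by field; rewrite ?(gt_eqF k0) ?(gt_eqF th0).
suff : 2 / k ^+ 2 <= 2 * E * (1 + s2 + s2pi / k + 1 / k ^+ 2) by lra.
have k2h : k ^+ 2 <= k / 2.
  by rewrite expr2 ler_wpM2l //; [exact: ltW | lra].
have k3 : k ^+ 3 <= k ^+ 2 / 2.
  by rewrite exprSr ler_wpM2l ?sqr_ge0 //; lra.
have k4 : k ^+ 4 <= k ^+ 3 / 2.
  by rewrite exprSr ler_wpM2l ?exprn_ge0 //; [exact: ltW | lra].
have E0 : 0 <= E by lra.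
have e1 : 2 * E * (1 + s2 + s2pi / k + 1 / k ^+ 2) =
   (2 / k ^+ 2) * (E * (k ^+ 2 * (1 + s2) + s2pi * k + 1)).
  by field; rewrite gt_eqF.
rewrite e1 -[X in X <= _]mulr1 ler_wpM2l ?divr_ge0 ?sqr_ge0 //.
have : E * (2 * k ^+ 2 + 2 * k + 1) <= E * (k ^+ 2 * (1 + s2) + s2pi * k + 1).
  rewrite ler_wpM2l //.
  have h3 : 0 <= k * (s2pi - 2) by rewrite mulr_ge0 ?subr_ge0 // ltW.
  have h2 : 0 <= k ^+ 2 * (s2 - 1) by rewrite mulr_ge0 ?subr_ge0 // sqr_ge0.
  lra.
suff : 1 <= E * (2 * k ^+ 2 + 2 * k + 1) by lra.
have : (1 - k ^+ 2 / 2) * (2 * k ^+ 2 + 2 * k + 1) <= E * (2 * k ^+ 2 + 2 * k + 1).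
  rewrite ler_wpM2r //.
  have := sqr_ge0 k; lra.
suff : 1 <= (1 - k ^+ 2 / 2) * (2 * k ^+ 2 + 2 * k + 1) by lra.
have := sqr_ge0 k. lra.
Qed.

Lemma pw (R : realType) (b x : R) : 0 < b ->
  x ^+ 2 + b * x <= 2 * b ^+ 2 * (nat_of_bool (0 <= x)%R)%:R + (Num.max (`|x| - b) 0) ^+ 2
     + 3 * b * Num.max (`|x| - b) 0.
Proof.
move=> b0; have [hx|hx] := leP 0 x.
  rewrite ger0_norm // maxEle; case: ifP => hb /=.
    have hb' : x - b <= 0 := hb.
    have : 0 <= (b - x) * (2 * b + x).
      by apply: mulr_ge0; lra.
    lra.
  lra.
rewrite ltr0_norm // maxEle; case: ifP => hb /=.
  have hb' : - x - b <= 0 := hb.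
  have : x * (x + b) <= 0.
    by apply: mulr_le0_ge0; lra.
  lra.
move/negbT: hb; rewrite -ltNge => hb.
have : b * (x + b) <= 0.
  by apply: mulr_ge0_le0; lra.
lra.
Qed.

Lemma int_bound d (T : measurableType d) (R : realType) (P : probability T R)
  (f : T -> R) (mf : measurable_fun setT f) (f0 : forall w, 0 <= f w) (c : R)
  (H : (\int[P]_w (f w)%:E <= c%:E)%E) : P.-integrable setT (EFin \o f).
Proof.
apply/integrableP; split; first exact/measurable_EFinP.
rewrite (eq_integral (fun w => (f w)%:E)); last first.
  by move=> w _ /=; rewrite ger0_norm.
exact: (le_lt_trans H (ltry _)).
Qed.
Arguments int_bound {d T R P f}.

Theorem corollary3 (d : measure_display) (T : measurableType d) (R : realType)
  (P : probability T R) (Z : {RV P >-> R})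
  (HZ : P.-integrable setT (EFin \o Z))
  (theta : R) (htheta : 0 < theta)
  (Htail : forall xi : R, 0 <= xi ->
     (P [set w | (xi <= `|Z w - fine ('E_P[Z])%E|)%R ] <=
      (2 * expR (- (xi ^+ 2 * theta ^+ 2) / 2))%:E)%E) :
  forall kappa : R, 0 < kappa ->
    ((theta ^+ 2 / (2 * kappa ^+ 2))%:E * 'V_P[Z]
      - (2 * expR (- (kappa ^+ 2) / 2) *
         (1 + Num.sqrt 2 + Num.sqrt (2 * pi) / kappa + 1 / kappa ^+ 2))%:E
     <= P [set w | (fine ('E_P[Z])%E <= Z w)%R])%E.
Proof.
move=> kappa k0.
set m := fine 'E_P[Z].
pose X := fun w => Z w - m.
have mZ : measurable_fun setT Z by exact: measurable_funPT.
have mX : measurable_fun setT X by apply: measurable_funB.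
have Ht : forall xi : R, 0 <= xi -> (P [set w | (xi <= `|X w|)%R ] <=
      (2 * expR (- (xi ^+ 2 * theta ^+ 2) / 2))%:E)%E by exact: Htail.
have VE : 'V_P[Z] = (\int[P]_w ((X w) ^+ 2)%:E)%E.
  rewrite /variance !unlock /=; apply: eq_integral => w _.
  by rewrite /X /m unlock /= expr2.
have V4 : ('V_P[Z] <= (4 / theta ^+ 2)%:E)%E.
  have := Eu2 mX htheta (lexx 0) Ht.
  have e0 : - ((0:R) ^+ 2 * theta ^+ 2) / 2 = 0 by rewrite expr2 !mul0r oppr0 mul0r.
  rewrite VE e0 expR0 mulr1.
  rewrite (_ : 2 / (theta ^+ 2 / 2) = 4 / theta ^+ 2); last first.
    by field; rewrite gt_eqF.
  apply: le_trans; rewrite le_eqVlt; apply/orP; left; apply/eqP.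
  apply: eq_integral => w _.
  by rewrite subr0 max_l ?normr_ge0 // real_normK // num_real.
have V0 := variance_ge0 P Z.
have Vfin : 'V_P[Z] \is a fin_num.
  by rewrite ge0_fin_numE //; apply: le_lt_trans V4 _; exact: ltry.
set A := [set w | (m <= Z w)%R].
have mA : measurable A by exact: mset_le.
set v := fine 'V_P[Z].
set p := fine (P A).
have Vv : 'V_P[Z] = v%:E by rewrite fineK.
have Pp : P A = p%:E by rewrite fineK // fin_num_measure.
have p0 : 0 <= p by rewrite -lee_fin -Pp measure_ge0.
have s21 : 1 <= Num.sqrt (2 : R).
  by rewrite -[X in X <= _]sqrtr1 ler_sqrt // ler1n.
have s2pi2 : 2 <= Num.sqrt (2 * pi : R).
  have h4 : Num.sqrt (4:R) = 2.
    have -> : (4:R) = 2 ^+ 2 by rewrite expr2 -natrM.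
    by rewrite sqrtr_sqr ger0_norm.
  rewrite -[X in X <= _]h4 ler_sqrt ?mulr_ge0 ?pi_ge0 //.
  have := @pi_ge2 R; lra.
rewrite Vv Pp -EFinM -EFinB lee_fin.
have [ksmall|klarge] := ltP kappa (1/2).
  apply: real_small => //.
  - have := expR_ge1Dx (- kappa ^+ 2 / 2); lra.
  - by rewrite -lee_fin -Vv.
pose b := kappa / theta.
have b0 : 0 < b by rewrite divr_gt0.
have eb : - (b ^+ 2 * theta ^+ 2) / 2 = - kappa ^+ 2 / 2.
  by rewrite /b; field; rewrite gt_eqF.
pose u := fun w => Num.max (`|X w| - b) 0.
have mu : measurable_fun setT u.
  apply: measurable_maxr => //; apply: measurable_funB => //.
  exact: measurableT_comp (@normr_measurable R setT) mX.
have u0 : forall w, 0 <= u w by move=> w; rewrite le_max lexx orbT.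
have H2 := Eu2 mX htheta (ltW b0) Ht.
have H1 := Eu1 mX htheta b0 Ht.
rewrite -/u eb in H1 H2.
have iu2 : P.-integrable setT (EFin \o (fun w => u w ^+ 2)).
  apply: int_bound H2; [exact: measurable_funX | by move=> w; exact: sqr_ge0].
have iu : P.-integrable setT (EFin \o u) by exact: int_bound H1.
have iX2 : P.-integrable setT (EFin \o (fun w => X w ^+ 2)).
  apply: int_bound; [exact: measurable_funX | by move=> w; exact: sqr_ge0 | ].
  by rewrite -VE; exact: V4.
have iA : P.-integrable setT (EFin \o \1_A).
  apply: (@int_bound _ _ _ P _ _ _ 1).
  - exact: measurable_indic.
  - by move=> w; rewrite indicE.
  - by rewrite integral_indic // setIT probability_le1.
have Efin : ('E_P[Z] \is a fin_num)%E by rewrite expectation_def integrable_fin_num.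
have iX : P.-integrable setT (EFin \o X).
  have iZm : P.-integrable setT ((EFin \o Z) \- (EFin \o cst m))%E.
    apply: integrableB => //; exact: finite_measure_integrable_cst.
  apply: (eq_integrable measurableT _ _ _ iZm) => w _.
  by rewrite /X /= EFinB.
have EX0 : (\int[P]_w (X w)%:E = 0)%E.
  under eq_integral do rewrite /X EFinB.
  rewrite integralB //; last exact: finite_measure_integrable_cst.
  rewrite -expectation_def (_ : (\int[P]_w m%:E)%E = m%:E); last first.
    rewrite (integral_cst P measurableT m%:E) -[RHS]mule1; congr (_ * _)%E; exact: probability_setT.
  by rewrite /m fineK // subee.
have LE : (\int[P]_w ((X w ^+ 2 + b * X w)%:E) <=
           \int[P]_w ((2 * b ^+ 2 * \1_A w + u w ^+ 2 + 3 * b * u w)%:E))%E.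
  apply: le_integral => //.
  - have iL : P.-integrable setT (fun w => (X w ^+ 2)%:E + b%:E * (X w)%:E)%E.
      by apply: integrableD => //; exact: integrableZl.
    apply: (eq_integrable measurableT _ _ _ iL) => w _.
    by rewrite -EFinM -EFinD.
  - have iR : P.-integrable setT (fun w => ((2 * b ^+ 2)%:E * (\1_A w)%:E + (u w ^+ 2)%:E) + (3 * b)%:E * (u w)%:E)%E.
      apply: integrableD => //; last exact: integrableZl.
      by apply: integrableD => //; exact: integrableZl.
    apply: (eq_integrable measurableT _ _ _ iR) => w _.
    by rewrite -!EFinM -!EFinD.
  move=> w _; rewrite lee_fin.
  have hA : (w \in A) = (0 <= X w).
    apply/idP/idP => [/set_mem|h]; first by rewrite /X subr_ge0.
    by apply/mem_set; rewrite /A /= -subr_ge0.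
  by rewrite indicE hA; exact: pw.
have iZX : P.-integrable setT (fun w => b%:E * (X w)%:E)%E.
  exact: integrableZl.
have iZA : P.-integrable setT (fun w => (2 * b ^+ 2)%:E * (\1_A w)%:E)%E.
  exact: integrableZl.
have iZu : P.-integrable setT (fun w => (3 * b)%:E * (u w)%:E)%E.
  exact: integrableZl.
have iAu2 : P.-integrable setT (fun w => (2 * b ^+ 2)%:E * (\1_A w)%:E + (u w ^+ 2)%:E)%E.
  exact: integrableD.
have IL : (\int[P]_w ((X w ^+ 2 + b * X w)%:E) = 'V_P[Z])%E.
  under eq_integral do rewrite EFinD EFinM.
  rewrite (integralD measurableT iX2 iZX).
  by rewrite integralZl // EX0 mule0 adde0 VE.
have IR : (\int[P]_w ((2 * b ^+ 2 * \1_A w + u w ^+ 2 + 3 * b * u w)%:E) =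
   (2 * b ^+ 2)%:E * P A + \int[P]_w ((u w ^+ 2)%:E) + (3 * b)%:E * \int[P]_w ((u w)%:E))%E.
  under eq_integral do rewrite EFinD EFinD (EFinM (2 * b ^+ 2)) (EFinM (3 * b)).
  rewrite (integralD measurableT iAu2 iZu).
  rewrite (integralD measurableT iZA iu2).
  by rewrite !integralZl // integral_indic // setIT.
have F2 := integrable_fin_num measurableT iu2.
have F1 := integrable_fin_num measurableT iu.
rewrite IL IR Vv Pp in LE.
rewrite -(fineK F2) in LE H2.
rewrite -(fineK F1) in LE H1.
rewrite -!EFinM -!EFinD lee_fin in LE.
rewrite lee_fin in H1.
rewrite lee_fin in H2.
move: LE H1 H2 => K K1 K2.
apply: real_large => //.
have b3 : 0 <= 3 * b by rewrite mulr_ge0 // ltW.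
have := ler_wpM2l b3 K1.
rewrite /b in K K1 K2 *.
lra.
Qed.
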